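(* Let $\psi$ be admissible, let $Q=Q(\partial_\psi)$ be a $\partial_\psi$-delta operator with $\partial_\psi$-basic polynomial sequence $(p_n)_{n\ge0}$, and let $\hat x_{Q}$ be its dual operator. (i) For an arbitrary sequence $(q_n)_{n\ge0}$ of polynomials in one variable, $T=\sum_{n\ge0}q_n(\hat x_{Q})\,Q^n$ defines a linear operator $P\to P$ (the sum being finite on each polynomial). (ii) Conversely, for every linear operator $T:P\to P$ there exists a unique sequence $(q_n)_{n\ge0}$ of polynomials such that $T=\sum_{n\ge0}q_n(\hat x_{Q})\,Q^n$.
   Context: $\mathbf F$ is a field of characteristic zero, $P=\mathbf F[x]$, $\mathrm{End}(P)$ the algebra of linear operators on $P$. An admissible sequence is $\psi=(\psi_n)_{n\ge0}$ with $\psi_n\in\mathbf F$, $\psi_0=1$, $\psi_n\neq0$; $n_\psi=\psi_{n-1}/\psi_n$ ($n\ge1$), $0_\psi=0$, $n_\psi!=n_\psi(n-1)_\psi\cdots1_\psi$, $0_\psi!=1$. The $\psi$-derivative is $\partial_\psi x^n=n_\psi x^{n-1}$; $E^y(\partial_\psi)=\sum_{k\ge0}\frac{y^k}{k_\psi!}\partial_\psi^{\,k}$ for $y\in\mathbf F$; $\Sigma_\psi=\{T\in\mathrm{End}(P):[T,E^\alpha(\partial_\psi)]=0\ \forall\alpha\in\mathbf F\}$. A $\partial_\psi$-delta operator is $Q\in\Sigma_\psi$ with $Q(x)$ a nonzero constant; its $\partial_\psi$-basic polynomial sequence is $(p_n)$ with $\deg p_n=n$, $p_0=1$, $p_n(0)=0$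 ($n>0$), $Qp_n=n_\psi p_{n-1}$. The dual operator $\hat x_Q$ is the linear map on $P$ with $\hat x_Qp_n=\frac{n+1}{(n+1)_\psi}p_{n+1}$ ($n\ge0$). *)

(* Defs.v *)
From HB Require Import structures.
From mathcomp Require Import all_boot all_order all_algebra.
Set Implicit Arguments. Unset Strict Implicit. Unset Printing Implicit Defensive.
Import Order.TTheory GRing.Theory Num.Theory.
Local Open Scope ring_scope.

Section PsiDefs.
Variable F : fieldType.
Implicit Types (psi : nat -> F) (p : {poly F}).

Definition admissible psi : Prop := psi 0%N = 1 /\ forall n, psi n != 0.

Definition npsi psi (n : nat) : F :=
  if n is m.+1 then psi m / psi m.+1 else 0.

Definition psi_fact psi (n : nat) : F := \prod_(1 <= k < n.+1) npsi psi k.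

(* the psi-derivative: x^n |-> n_psi x^(n-1), extended linearly *)
Definition dpsi psi (p : {poly F}) : {poly F} :=
  \poly_(i < (size p).-1) (p`_i.+1 * npsi psi i.+1).

(* E^y(d_psi) = sum_k y^k/k_psi! d_psi^k  (terms with k >= size p vanish) *)
Definition Epsi psi (y : F) (p : {poly F}) : {poly F} :=
  \sum_(k < size p) (y ^+ k / psi_fact psi k) *: iter k (dpsi psi) p.

Definition in_Sigma psi (T : {poly F} -> {poly F}) : Prop :=
  linear T /\ forall (alpha : F) p, T (Epsi psi alpha p) = Epsi psi alpha (T p).

Definition delta_op psi (Q : {poly F} -> {poly F}) : Prop :=
  in_Sigma psi Q /\ exists c : F, c != 0 /\ Q 'X = c%:P.

Definition basic_seq psi (Q : {poly F} -> {poly F}) (pn : nat -> {poly F}) : Prop :=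
  (forall n, size (pn n) = n.+1) /\ pn 0%N = 1 /\
  (forall n, (0 < n)%N -> (pn n).[0] = 0) /\
  (forall n, Q (pn n) = npsi psi n *: pn n.-1).

Definition dual_op psi (pn : nat -> {poly F}) (X : {poly F} -> {poly F}) : Prop :=
  linear X /\
  forall n, X (pn n) = ((n.+1)%:R / npsi psi n.+1) *: pn n.+1.

Definition op_eval (q : {poly F}) (A : {poly F} -> {poly F}) (r : {poly F}) : {poly F} :=
  \sum_(i < size q) q`_i *: iter i A r.

Definition series_term (q : nat -> {poly F}) (X Q : {poly F} -> {poly F})
  (n : nat) (p : {poly F}) : {poly F} := op_eval (q n) X (iter n Q p).

(* "sum_{n>=0} q_n(X) Q^n p = t", with the sum finite (all terms beyond
   some N vanish) *)
Definition series_val (q : nat -> {poly F}) (X Q : {poly F} -> {poly F})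
  (p t : {poly F}) : Prop :=
  exists N : nat, (forall n, (N <= n)%N -> series_term q X Q n p = 0) /\
                  t = \sum_(n < N) series_term q X Q n p.

End PsiDefs.

(* Main.v *)
Require Import Defs.
From HB Require Import structures.
From mathcomp Require Import all_boot all_order all_algebra.
Import GRing.Theory.
Local Open Scope ring_scope.
Set Implicit Arguments. Unset Strict Implicit.

Section Lin.
Variable F : fieldType.
Implicit Types (f g : {poly F} -> {poly F}).

Lemma lin0 f : linear f -> f 0 = 0.
Proof. move=> H; have := H 1 0 0; rewrite !scale1r addr0 => e.
by rewrite -[LHS](addrK (f 0)) -e subrr. Qed.

Lemma linD f : linear f -> forall u v, f (u + v) = f u + f v.
Proof. by move=> H u v; have := H 1 u v; rewrite !scale1r. Qed.

Lemma linZ f : linear f -> forall a u, f (a *: u) = a *: f u.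
Proof. by move=> H a u; have := H a u 0; rewrite !addr0 (lin0 H) addr0. Qed.

Lemma lin_sum f (I : Type) (r : seq I) (P : pred I) (G : I -> {poly F}) :
  linear f -> f (\sum_(i <- r | P i) G i) = \sum_(i <- r | P i) f (G i).
Proof. move=> H; exact: (big_morph f (linD H) (lin0 H)). Qed.

Lemma lin_iter f n : linear f -> linear (iter n f).
Proof. move=> H; elim: n => [|n IH] a u v //=. by rewrite IH H. Qed.

Lemma lin_op_eval (q : {poly F}) f : linear f -> linear (op_eval q f).
Proof.
move=> H a u v; rewrite /op_eval scaler_sumr -big_split /=; apply: eq_bigr => i _.
by rewrite (lin_iter i H) scalerDr !scalerA mulrC.
Qed.

Lemma lin_term (q : nat -> {poly F}) (A D : {poly F} -> {poly F}) n : linear A -> linear D -> linear (series_term q A D n).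
Proof. move=> HA HD a u v; rewrite /series_term (lin_iter n HD).
exact: lin_op_eval. Qed.

Lemma sum_trunc (f : nat -> {poly F}) K M : (K <= M)%N -> (forall n, (K <= n)%N -> f n = 0) ->
  \sum_(n < M) f n = \sum_(n < K) f n.
Proof.
move=> KM H; rewrite (big_ord_widen M f KM) [RHS]big_mkcond /=.
apply: eq_bigr => i _; case: ifP => // /negbT; rewrite -leqNgt => /H ->.
by [].
Qed.

Lemma op_eval_trunc (q : {poly F}) f x K : (size q <= K)%N ->
  op_eval q f x = \sum_(i < K) q`_i *: iter i f x.
Proof.
move=> h; rewrite /op_eval (sum_trunc (f:=fun i => q`_i *: iter i f x) h) //.
by move=> n hn; rewrite nth_default // scale0r.
Qed.

End Lin.
Section Basis.
Variable F : fieldType.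

Fixpoint bc (e : nat -> {poly F}) (s : nat) (r : {poly F}) (k : nat) : F :=
  match s with
  | 0 => 0
  | s'.+1 => let c := r`_s' / lead_coef (e s') in
             if k == s' then c else bc e s' (r - c *: e s') k
  end.

Variable e : nat -> {poly F}.
Hypothesis se : forall i, size (e i) = i.+1.

Lemma lead_e i : lead_coef (e i) != 0.
Proof. by rewrite lead_coef_eq0 -size_poly_eq0 se. Qed.

Lemma size_comb s (a : nat -> F) : (size (\sum_(k < s) a k *: e k)%R <= s)%N.
Proof.
elim: s => [|s IH]; first by rewrite big_ord0 size_poly0.
rewrite big_ord_recr /=; apply: leq_trans (size_polyD _ _) _.
rewrite geq_max (leq_trans IH) //.
by rewrite (leq_trans (size_scale_leq _ _)) // se.
Qed.

Lemma indep s (a : nat -> F) : \sum_(k < s) a k *: e k = 0 ->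
  forall k, (k < s)%N -> a k = 0.
Proof.
elim: s => [|s IH] H k; first by [].
move: H; rewrite big_ord_recr /= => H.
have hs : a s = 0.
  have := congr1 (fun p : {poly F} => p`_s) H.
  rewrite coefD coefZ coef0 nth_default ?size_comb // add0r.
  move/eqP; rewrite mulf_eq0 => /orP [/eqP //|].
  have -> : (e s)`_s = lead_coef (e s) by rewrite lead_coefE se.
  by rewrite (negbTE (lead_e s)).
move: H; rewrite hs scale0r addr0 => H.
rewrite ltnS leq_eqVlt => /orP [/eqP -> //|]; exact: IH.
Qed.

Lemma decomp s (r : {poly F}) : (size r <= s)%N -> r = \sum_(k < s) bc e s r k *: e k.
Proof.
elim: s r => [|s IH] r hr.
  by rewrite big_ord0; apply/eqP; rewrite -size_poly_eq0 -leqn0.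
rewrite big_ord_recr /= eqxx.
set c := r`_s / lead_coef (e s).
have hr' : (size (r - c *: e s)%R <= s)%N.
  have h1 : (size (r - c *: e s)%R <= s.+1)%N.
    apply: leq_trans (size_polyD _ _) _; rewrite geq_max hr size_polyN.
    by rewrite (leq_trans (size_scale_leq _ _)) // se.
  case: (ltnP s (size (r - c *: e s))) => // h2.
  have h3 : size (r - c *: e s) = s.+1 by apply/eqP; rewrite eqn_leq h1 h2.
  have : lead_coef (r - c *: e s) = 0.
    rewrite lead_coefE h3 /= coefB coefZ.
    have -> : (e s)`_s = lead_coef (e s) by rewrite lead_coefE se.
    by rewrite /c divfK ?subrr // lead_e.
  by move/eqP; rewrite lead_coef_eq0 => /eqP h4; rewrite h4 size_poly0 in h3.
rewrite -[r in LHS](subrK (c *: e s)); congr (_ + _).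
rewrite {1}(IH _ hr'); apply: eq_bigr => i _.
by rewrite (ltn_eqF (ltn_ord i)).
Qed.

End Basis.

Section Main.
Variable F : fieldType.
Variables (b : nat -> {poly F}) (A D : {poly F} -> {poly F}).
Implicit Types (p t x : {poly F}).
Hypothesis sb : forall n, size (b n) = n.+1.
Hypothesis LA : linear A.
Hypothesis LD : linear D.
Hypothesis Db0 : D (b 0) = 0.
Hypothesis DbS : forall n, exists2 c : F, c != 0 & D (b n.+1) = c *: b n.
Hypothesis Ab : forall n, exists2 c : F, c != 0 & A (b n) = c *: b n.+1.

Lemma iterD_b n k : exists2 c : F, c != 0 & iter n D (b (n + k)) = c *: b k.
Proof.
elim: n k => [|n IH] k; first by exists 1; rewrite ?oner_neq0 ?scale1r.
rewrite addSnnS /=; have [c hc ->] := IH k.+1.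
have [c' hc' e] := DbS k.
by exists (c * c'); rewrite ?mulf_neq0 // (linZ LD) e scalerA.
Qed.

Lemma iterD_vanish m n : (m < n)%N -> iter n D (b m) = 0.
Proof.
move=> h; rewrite -(subnK h) iterD /=.
have [c _ e] := iterD_b m 0; rewrite addn0 in e.
by rewrite e (linZ LD) Db0 scaler0 (lin0 (lin_iter _ LD)).
Qed.

Lemma iterA_b i x k (c : F) : c != 0 -> x = c *: b k ->
  exists2 c' : F, c' != 0 & iter i A x = c' *: b (k + i).
Proof.
move=> hc ->; elim: i => [|i [c' hc' IH]]; first by exists c; rewrite ?addn0.
have [c'' hc'' e] := Ab (k + i).
by exists (c' * c''); rewrite ?mulf_neq0 //= IH (linZ LA) e scalerA addnS.
Qed.

Definition fam m i := iter i A (iter m D (b m)).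

Lemma size_fam m i : size (fam m i) = i.+1.
Proof.
have [c hc e] := iterD_b m 0; rewrite addn0 in e.
rewrite /fam; have [c' hc' ->] := iterA_b i hc e.
by rewrite size_scale // add0n sb.
Qed.

Lemma vanish_p p n : (size p <= n)%N -> iter n D p = 0.
Proof.
move=> h; rewrite (decomp sb (leqnn (size p))) (lin_sum _ _ _ (lin_iter n LD)).
apply: big1 => k _; rewrite (linZ (lin_iter n LD)) iterD_vanish ?scaler0 //.
exact: leq_trans (ltn_ord k) h.
Qed.

Lemma term_vanish (q : nat -> {poly F}) n p : (size p <= n)%N -> series_term q A D n p = 0.
Proof. by move=> h; rewrite /series_term vanish_p // (lin0 (lin_op_eval _ LA)). Qed.

Lemma series_val_sum (q : nat -> {poly F}) p t : series_val q A D p t ->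
  t = \sum_(n < size p) series_term q A D n p.
Proof.
move=> [N [hN ->]].
rewrite -(@sum_trunc _ (fun n => series_term q A D n p) N (maxn N (size p))) ?leq_maxl //.
apply: (@sum_trunc _ (fun n => series_term q A D n p)); first exact: leq_maxr.
by move=> n hn; apply: term_vanish.
Qed.

Lemma op_eval_poly K (f : nat -> F) x :
  op_eval (\poly_(i < K) f i) A x = \sum_(i < K) f i *: iter i A x.
Proof.
rewrite (op_eval_trunc _ _ (size_poly K f)); apply: eq_bigr => i _.
by rewrite coef_poly ltn_ord.
Qed.

Lemma part1 (q : nat -> {poly F}) : exists T : {poly F} -> {poly F},
  linear T /\ forall p, series_val q A D p (T p).
Proof.
exists (fun p => \sum_(n < size p) series_term q A D n p); split; last first.
  by move=> p; exists (size p); split => // n; apply: term_vanish.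
move=> a u v /=.
set M := maxn (size u) (size v).
have tr p : (size p <= M)%N -> \sum_(n < size p) series_term q A D n p =
    \sum_(n < M) series_term q A D n p.
  move=> h; symmetry; apply: (@sum_trunc _ (fun n => series_term q A D n p)) => // n hn; exact: term_vanish.
rewrite !tr ?leq_maxl ?leq_maxr //; last first.
  apply: leq_trans (size_polyD _ _) _; rewrite geq_max leq_maxr andbT.
  exact: leq_trans (size_scale_leq _ _) (leq_maxl _ _).
rewrite scaler_sumr -big_split /=; apply: eq_bigr => n _.
exact: (lin_term _ n LA LD).
Qed.

Variable T : {poly F} -> {poly F}.
Hypothesis LT : linear T.

Definition resid m (qf : nat -> {poly F}) :=
  T (b m) - \sum_(n < m) series_term qf A D n (b m).

Definition newq m (qf : nat -> {poly F}) : {poly F} :=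
  \poly_(i < size (resid m qf)) bc (fam m) (size (resid m qf)) (resid m qf) i.

Fixpoint qs m : seq {poly F} :=
  if m is m'.+1 then rcons (qs m') (newq m' (fun n => nth 0 (qs m') n)) else [::].

Definition qq n := nth 0 (qs n.+1) n.

Lemma size_qs m : size (qs m) = m.
Proof. by elim: m => //= m IH; rewrite size_rcons IH. Qed.

Lemma nth_qs m n : (n < m)%N -> nth 0 (qs m) n = qq n.
Proof.
elim: m => // m IH; rewrite ltnS leq_eqVlt => /orP [/eqP -> //|h].
by rewrite /= nth_rcons size_qs h IH.
Qed.

Lemma resid_eq m qf1 qf2 : (forall n, (n < m)%N -> qf1 n = qf2 n) ->
  resid m qf1 = resid m qf2.
Proof.
move=> H; rewrite /resid; congr (_ - _); apply: eq_bigr => i _.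
by rewrite /series_term H.
Qed.

Lemma qq_eq m : qq m = newq m qq.
Proof.
rewrite /qq /= nth_rcons size_qs ltnn eqxx /newq.
by rewrite (resid_eq (qf2 := qq)) // => n; apply: nth_qs.
Qed.

Lemma key m : T (b m) = \sum_(n < m.+1) series_term qq A D n (b m).
Proof.
rewrite big_ord_recr /=.
have -> : series_term qq A D m (b m) = resid m qq.
  rewrite /series_term qq_eq /newq op_eval_poly.
  by rewrite -(decomp (size_fam m) (leqnn _)).
by rewrite /resid addrC subrK.
Qed.

Lemma part2_ex p : series_val qq A D p (T p).
Proof.
exists (size p); split; first by move=> n; apply: term_vanish.
set s := size p; have hs : (size p <= s)%N by []; clearbody s.
have [a {hs}->] : exists a, p = \sum_(k < s) a k *: b k.
  by exists (bc b s p); exact: (decomp sb hs).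
rewrite (lin_sum _ _ _ LT).
transitivity (\sum_(k < s) \sum_(n < s) a k *: series_term qq A D n (b k)).
  apply: eq_bigr => k _; rewrite (linZ LT) key scaler_sumr.
  symmetry; apply: (@sum_trunc _ (fun n => a k *: series_term qq A D n (b k))) => // n hn.
  by rewrite term_vanish ?scaler0 // sb.
rewrite exchange_big /=; apply: eq_bigr => n _.
rewrite (lin_sum _ _ _ (lin_term _ n LA LD)); apply: eq_bigr => k _.
by rewrite (linZ (lin_term _ n LA LD)).
Qed.

Lemma part2_uniq (q1 q2 : nat -> {poly F}) :
  (forall p, series_val q1 A D p (T p)) -> (forall p, series_val q2 A D p (T p)) ->
  forall m, q1 m = q2 m.
Proof.
move=> H1 H2.
suff: forall m n, (n < m)%N -> q1 n = q2 n by move=> h m; apply: (h m.+1).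
elim=> // m IH n; rewrite ltnS leq_eqVlt => /orP [/eqP ->|]; last exact: IH.
have e1 := series_val_sum (H1 (b m)); have e2 := series_val_sum (H2 (b m)).
rewrite e1 sb !big_ord_recr /= in e2.
have e3 : \sum_(i < m) series_term q1 A D i (b m) = \sum_(i < m) series_term q2 A D i (b m).
  by apply: eq_bigr => i _; rewrite /series_term IH.
rewrite e3 in e2; move/addrI: e2; rewrite /series_term.
set K := maxn (size (q1 m)) (size (q2 m)).
rewrite (op_eval_trunc _ _ (leq_maxl (size (q1 m)) (size (q2 m)))).
rewrite (op_eval_trunc _ _ (leq_maxr (size (q1 m)) (size (q2 m)))) -/K.
move/eqP; rewrite -subr_eq0 -sumrB => /eqP h.
have h' : \sum_(i < K) ((q1 m)`_i - (q2 m)`_i) *: fam m i = 0.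
  by rewrite -[RHS]h; apply: eq_bigr => i _; rewrite scalerBl.
apply/polyP => i; case: (ltnP i K) => hi.
  apply/eqP; rewrite -subr_eq0; apply/eqP.
  exact: (@indep _ (fam m) (@size_fam m) K (fun i => (q1 m)`_i - (q2 m)`_i) h' i hi).
by rewrite !nth_default // (leq_trans _ hi) // ?leq_maxl ?leq_maxr.
Qed.

End Main.

From Stdlib Require Import FunctionalExtensionality.

Theorem proposition3p3 (F : fieldType) (charF0 : [pchar F] =i pred0)
  (psi : nat -> F) (Q : {poly F} -> {poly F}) (pn : nat -> {poly F})
  (xQ : {poly F} -> {poly F}) :
  admissible psi -> delta_op psi Q -> basic_seq psi Q pn -> dual_op psi pn xQ ->
  (* (i) *)
  (forall q : nat -> {poly F},
     exists T : {poly F} -> {poly F},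
       linear T /\ forall p, series_val q xQ Q p (T p)) /\
  (* (ii) *)
  (forall T : {poly F} -> {poly F}, linear T ->
     exists! q : nat -> {poly F}, forall p, series_val q xQ Q p (T p)).
Proof.
move=> [psi0 psinz] [[LQ _] _] [sb [_ [_ Qb]]] [LX Xb].
have npsinz n : npsi psi n.+1 != 0.
  by rewrite /= mulf_neq0 ?invr_eq0.
have Db0 : Q (pn 0) = 0 by rewrite Qb /= scale0r.
have DbS n : exists2 c : F, c != 0 & Q (pn n.+1) = c *: pn n.
  by exists (npsi psi n.+1); rewrite ?Qb.
have Ab n : exists2 c : F, c != 0 & xQ (pn n) = c *: pn n.+1.
  exists ((n.+1)%:R / npsi psi n.+1); rewrite ?Xb //.
  rewrite mulf_neq0 ?invr_eq0 //.
  by rewrite ((pcharf0P F).1 charF0).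
split; first by move=> q; exact: (part1 sb LX LQ Db0 DbS).
move=> T LT; exists (qq pn xQ Q T); split.
  exact: (part2_ex sb LX LQ Db0 DbS Ab LT).
move=> q' Hq'; apply: functional_extensionality => m.
apply: (part2_uniq sb LX LQ Db0 DbS Ab) => //.
exact: (part2_ex sb LX LQ Db0 DbS Ab LT).
Qed.
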